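(* For all integers $m\ge1$ and $n,h,r\ge0$, $$\mathcal D_{m,r}(n+h,u)=\sum_{k=0}^n\sum_{j=0}^h\binom nk\,\mathcal D_{m,r}(k,u)\,W_{m,r}(h,j)\,u^j\,j^{\,n-k}m^{\,n-k},$$ with the convention $0^0=1$.
   Context: For integers $m\ge1$, $n,k,r\ge0$, $W_{m,r}(n,k)$ denotes the $r$-Whitney number of the second kind, defined by $\sum_{n\ge k}W_{m,r}(n,k)\frac{z^n}{n!}=\frac{e^{rz}}{k!}\left(\frac{e^{mz}-1}{m}\right)^k$ (and $W_{m,r}(n,k)=0$ if $k<0$ or $k>n$). The $r$-Dowling polynomial is $\mathcal D_{m,r}(n,u):=\sum_{k=0}^nW_{m,r}(n,k)u^k$. *)

(* Defs.v *)
From HB Require Import structures.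
From mathcomp Require Import all_boot all_order all_algebra.
Set Implicit Arguments. Unset Strict Implicit. Unset Printing Implicit Defensive.
Import Order.TTheory GRing.Theory Num.Theory.
Local Open Scope ring_scope.

(* The defining EGF  e^{rz}/k! ((e^{mz}-1)/m)^k  expands (binomial theorem)
   to  1/(k! m^k) sum_{j=0}^k (-1)^(k-j) C(k,j) e^{(mj+r)z}; extracting the
   coefficient of z^n/n! gives the formula below. *)
Definition Whit (m r n k : nat) : rat :=
  if (k <= n)%N then
    (\sum_(j < k.+1) (-1) ^+ (k - j) * ('C(k, j))%:R * ((m * j + r) ^ n)%N%:R)
      / ((m ^ k)%N%:R * (k`!)%:R)
  else 0.

Definition Dowling (m r n : nat) : {poly rat} :=
  \sum_(k < n.+1) Whit m r n k *: 'X^k.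

(* Main.v *)
Require Import Defs.
From HB Require Import structures.
From mathcomp Require Import all_boot all_order all_algebra.
From mathcomp Require Import zify ring lra.
Import Order.TTheory GRing.Theory Num.Theory.
Local Open Scope ring_scope.

Definition S (m r n k : nat) : rat :=
  \sum_(j < k.+1) (-1) ^+ (k - j) * ('C(k, j))%:R * ((m * j + r) ^ n)%N%:R.

Lemma S_n0 m r n : S m r n 0 = (r ^ n)%N%:R.
Proof. by rewrite /S big_ord1 /= subnn expr0 bin0 muln0 add0n !mul1r. Qed.

Lemma S_0S m r k : S m r 0 k.+1 = 0.
Proof.
have := exprDn (-1 : rat) 1 k.+1.
rewrite addNr expr0n /= => E.
rewrite /S [RHS]E; apply: eq_bigr => j _.
by rewrite expr1n mulr1 expn0 mulr1 mulr_natr.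
Qed.

Lemma S_SS m r n k :
  S m r n.+1 k.+1 = ((m * k.+1 + r)%N%:R) * S m r n k.+1
                    + (m * k.+1)%N%:R * S m r n k.
Proof.
have -> : S m r n k = \sum_(j < k.+2) (-1) ^+ (k - j) * ('C(k, j))%:R * ((m * j + r) ^ n)%N%:R.
  by rewrite big_ord_recr /= bin_small // mulr0 mul0r addr0.
rewrite /S mulr_sumr mulr_sumr -big_split /=; apply: eq_bigr => [[j]] /= hj _.
rewrite expnS natrM.
have hA : (m * k.+1 + r = m * j + r + m * (k.+1 - j))%N.
  have hle : (m * j <= m * k.+1)%N by rewrite leq_mul2l -ltnS hj orbT.
  rewrite mulnBr; lia.
rewrite hA natrD.
have hb : ('C(k.+1, j) * (k.+1 - j) = k.+1 * 'C(k, j))%N.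
  by rewrite mulnC (mul_bin_down k.+1 j).
case: (ltngtP j k.+1) => hjk; last first.
- subst j; rewrite subnn muln0 addn0 (bin_small (ltnSn k)) mulr0 mul0r mulr0 addr0.
  by rewrite !natrD; ring.
- lia.
have hs : (k.+1 - j = (k - j).+1)%N by lia.
have hb' : ('C(k, j))%:R = ('C(k.+1, j))%:R * ((k - j).+1)%:R / (k.+1)%:R :> rat.
  rewrite -natrM -hs hb natrM mulrC mulrA mulVf ?mul1r //.
  by rewrite pnatr_eq0.
rewrite hb' hs exprS !natrD !natrM.
field.
by rewrite -(natrD _ 1 k) pnatr_eq0.
Qed.
Lemma S_vanish m r n k : (n < k)%N -> S m r n k = 0.
Proof.
elim: n k => [|n IH] [|k] //= hk; first exact: S_0S.
by rewrite S_SS !IH ?mulr0 ?addr0 // ltnW.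
Qed.

Lemma Whit_S m r n k : (0 < m)%N ->
  Whit m r n k = S m r n k / ((m ^ k)%N%:R * (k`!)%:R).
Proof.
move=> hm; rewrite /Whit; case: leqP => // h.
by rewrite S_vanish // mul0r.
Qed.

Lemma Whit_rec0 m r n : (0 < m)%N ->
  Whit m r n.+1 0 = r%:R * Whit m r n 0.
Proof.
move=> hm; rewrite !Whit_S // !S_n0 expn0 fact0 expnS natrM; by field.
Qed.

Lemma Whit_recS m r n k : (0 < m)%N ->
  Whit m r n.+1 k.+1 = Whit m r n k + (m * k.+1 + r)%N%:R * Whit m r n k.+1.
Proof.
move=> hm; rewrite !Whit_S // S_SS expnS factS !natrM.
have h1 : (m%:R : rat) != 0 by rewrite pnatr_eq0 -lt0n.
have h2 : ((m ^ k)%:R : rat) != 0 by rewrite pnatr_eq0 -lt0n expn_gt0 hm.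
have h3 : ((k`!)%:R : rat) != 0 by rewrite pnatr_eq0 -lt0n fact_gt0.
have h4 : ((k.+1)%:R : rat) != 0 by rewrite pnatr_eq0.
field.
by rewrite h1 h2 h3 -(natrD _ 1 k) h4.
Qed.

Lemma coef_Dowling m r n k : (Dowling m r n)`_k = Whit m r n k.
Proof.
rewrite /Dowling coef_sum.
under eq_bigr => i _ do rewrite coefZ coefXn.
case: (ltnP k n.+1) => hk.
  rewrite (bigD1 (Ordinal hk)) //= eqxx mulr1 big1 ?addr0 // => i hi.
  have : (i : nat) != k by apply: contraNneq hi => e; apply/eqP; exact: val_inj.
  by rewrite eq_sym => /negbTE ->; rewrite mulr0.
rewrite big1; last by move=> i _; rewrite (gtn_eqF (leq_trans (ltn_ord i) hk)) mulr0.
by rewrite /Whit leqNgt hk.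
Qed.
Definition T (m r : nat) (p : {poly rat}) : {poly rat} :=
  p * ('X + (r%:R)%:P) + (m%:R : rat) *: ('X * p^`()).

Lemma Dowling0 m r : (0 < m)%N -> Dowling m r 0 = 1.
Proof.
move=> hm; apply/polyP => k; rewrite coef_Dowling coef1.
case: k => [|k]; last by rewrite /Whit.
rewrite Whit_S // S_n0 !expn0 fact0 /=.
by rewrite !mulr1n mulr1 ?invr1.
Qed.

Lemma Dowling_S m r n : (0 < m)%N -> Dowling m r n.+1 = T m r (Dowling m r n).
Proof.
move=> hm; apply/polyP => k; rewrite /T coefD mulrDr coefD coefMX coefMC coefZ coefXM.
case: k => [|k] /=; rewrite !coef_Dowling.
  by rewrite Whit_rec0 // add0r mulr0 addr0 mulrC.
rewrite coef_deriv coef_Dowling Whit_recS // -mulr_natr natrD natrM; ring.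
Qed.

Lemma T_add m r p q : T m r (p + q) = T m r p + T m r q.
Proof. rewrite /T derivD -!mul_polyC; ring. Qed.

Lemma T_scale m r a p : T m r (a *: p) = a *: T m r p.
Proof. rewrite /T derivZ -!mul_polyC; ring. Qed.

Lemma T0 m r : T m r 0 = 0.
Proof. by rewrite /T deriv0 !mul0r mulr0 scaler0 addr0. Qed.

Lemma T_mulXn m r p j :
  T m r (p * 'X^j) = T m r p * 'X^j + (m * j)%N%:R *: (p * 'X^j).
Proof.
rewrite /T derivM derivXn.
case: j => [|j].
  by rewrite mulr0n mulr0 addr0 muln0 scale0r addr0 expr0 !mulr1.
rewrite -!mul_polyC /= -mulr_natr exprS !polyC_natr natrM; ring.
Qed.
Lemma iterT_add m r n p q : iter n (T m r) (p + q) = iter n (T m r) p + iter n (T m r) q.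
Proof. by elim: n => //= n ->; rewrite T_add. Qed.

Lemma iterT_scale m r n a p : iter n (T m r) (a *: p) = a *: iter n (T m r) p.
Proof. by elim: n => //= n ->; rewrite T_scale. Qed.

Lemma iterT0 m r n : iter n (T m r) 0 = 0.
Proof. by elim: n => //= n ->; rewrite T0. Qed.

Lemma iterT_mulXn m r n p j :
  iter n (T m r) (p * 'X^j) =
  iter n (fun q => T m r q + (m * j)%N%:R *: q) p * 'X^j.
Proof. by elim: n => //= n ->; rewrite T_mulXn scalerAl -mulrDl. Qed.

Lemma Dowling_iter m r n : (0 < m)%N -> Dowling m r n = iter n (T m r) 1.
Proof. by move=> hm; elim: n => [|n IH] /=; rewrite ?Dowling0 // Dowling_S // IH. Qed.

Lemma iter_binom m r (c : rat) n g :
  iter n (fun q => T m r q + c *: q) g =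
  \sum_(k < n.+1) (('C(n, k))%:R * c ^+ (n - k)) *: iter k (T m r) g.
Proof.
elim: n => [|n IH].
  by rewrite big_ord1 /= mul1r scale1r.
rewrite iterS IH.
have Tsum : forall (I : finType) (F : I -> {poly rat}),
    T m r (\sum_i F i) = \sum_i T m r (F i).
  by move=> I F; apply: (big_morph _ (T_add m r) (T0 m r)).
rewrite Tsum scaler_sumr.
under eq_bigr => i _ do rewrite T_scale.
under [X in _ + X = _]eq_bigr => i _ do rewrite scalerA.
rewrite [X in _ + X = _]big_ord_recl [RHS]big_ord_recl /=.
under [in RHS]eq_bigr => i _ do rewrite binS natrD mulrDl scalerDl.
rewrite big_split /= [X in _ = _ + (X + _)]big_ord_recr /= (bin_small (ltnSn n)).
rewrite mul0r scale0r addr0 addrCA [X in _ = _ + X]addrC.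
congr (_ + (_ + _)).
  by rewrite !bin0 !subn0 !mul1r exprS.
apply: eq_bigr => [[i hi]] _ /=; rewrite /bump /= add1n subSS; congr (_ *: _).
have -> : (n - i = (n - i.+1).+1)%N by lia.
by rewrite exprS; ring.
Qed.
Theorem mainTheorem5 (m n h r : nat) (hm : (0 < m)%N) :
  Dowling m r (n + h) =
  \sum_(k < n.+1) \sum_(j < h.+1)
     ('C(n, k))%:R *: (Dowling m r k *
        ((Whit m r h j * ((j ^ (n - k)) * (m ^ (n - k)))%N%:R) *: 'X^j)).
Proof.
rewrite (Dowling_iter _ _ (n + h)) // iterD -Dowling_iter //.
have -> : Dowling m r h = \sum_(j < h.+1) Whit m r h j *: (1 * 'X^j).
  by rewrite /Dowling; apply: eq_bigr => j _; rewrite mul1r.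
rewrite (big_morph _ (iterT_add m r n) (iterT0 m r n)) exchange_big /=.
apply: eq_bigr => j _.
rewrite iterT_scale iterT_mulXn iter_binom mulr_suml scaler_sumr.
apply: eq_bigr => k _.
rewrite -Dowling_iter //.
rewrite -scalerAl -scalerAr !scalerA; congr (_ *: _).
rewrite !natrM !natrX exprMn.
move: (Whit m r h j) (('C(n, k))%:R : rat) ((m%:R : rat) ^+ (n - k)) ((j%:R : rat) ^+ (n - k)) => a b c d.
ring.
Qed.
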